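(* Let $H$ be a connected regular graph. Then, up to isomorphism, $\operatorname{obs}^\ast(H)=\{K_1+K_2,K_3\}$ if $H\cong K_2$; $\operatorname{obs}^\ast(H)=\{K_{n+1}\}$ if $H\cong K_n$ with $n\ne 2$; and $\operatorname{obs}^\ast(H)=\varnothing$ otherwise.
   Context: All graphs are finite, simple and loopless. $K_n$ is the complete graph on $n$ vertices and $+$ denotes disjoint union. A full-homomorphism $\varphi\colon G\to H$ is a map $V(G)\to V(H)$ such that for all $x,y\in V(G)$, $xy\in E(G)$ if and only if $\varphi(x)\varphi(y)\in E(H)$. A full $H$-colouring of $G$ is a full-homomorphism $G\to H$. A minimal $H$-obstruction is a graph $G$ that admits no full $H$-colouring while every proper induced subgraph of $G$ admits one; $\operatorname{obs}(H)$ denotes the set of minimal $H$-obstructions (up to isomorphism), and $\operatorname{obs}^\ast(H)$ the set of minimal $H$-obstructions on exactly $|V(H)|+1$ vertices. *)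

(* Defs.v *)
From mathcomp Require Import all_boot.
Set Implicit Arguments. Unset Strict Implicit. Unset Printing Implicit Defensive.

Record graph := Graph {
  vertex : finType;
  adj : rel vertex;
  adj_sym : symmetric adj;
  adj_irrefl : irreflexive adj }.

Arguments adj {g}.

Definition full_hom (G H : graph) (f : vertex G -> vertex H) : Prop :=
  forall x y : vertex G, adj x y = adj (f x) (f y).

Definition full_colourable (G H : graph) : Prop :=
  exists f : vertex G -> vertex H, full_hom f.

Section Induced.
Variables (G : graph) (S : {set vertex G}).
Definition induced_adj : rel {x : vertex G | x \in S} :=
  fun x y => adj (val x) (val y).
Lemma induced_adj_sym : symmetric induced_adj.
Proof. by move=> x y; rewrite /induced_adj adj_sym. Qed.
Lemma induced_adj_irrefl : irreflexive induced_adj.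
Proof. by move=> x; rewrite /induced_adj adj_irrefl. Qed.
Definition induced : graph := Graph induced_adj_sym induced_adj_irrefl.
End Induced.

Definition min_obstruction (H G : graph) : Prop :=
  ~ full_colourable G H /\
  forall S : {set vertex G}, S \proper [set: vertex G] ->
    full_colourable (induced S) H.

Definition iso (G1 G2 : graph) : Prop :=
  exists f : vertex G1 -> vertex G2, bijective f /\
    forall x y, adj x y = adj (f x) (f y).

Definition K_adj (n : nat) : rel 'I_n := fun i j => i != j.
Lemma K_adj_sym (n : nat) : symmetric (@K_adj n).
Proof. by move=> i j; rewrite /K_adj eq_sym. Qed.
Lemma K_adj_irrefl (n : nat) : irreflexive (@K_adj n).
Proof. by move=> i; rewrite /K_adj eqxx. Qed.
Definition K (n : nat) : graph := @Graph (ordinal n) (@K_adj n) (@K_adj_sym n) (@K_adj_irrefl n).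

Section Union.
Variables G1 G2 : graph.
Definition gsum_adj : rel (vertex G1 + vertex G2) :=
  fun x y => match x, y with
  | inl a, inl b => adj a b
  | inr a, inr b => adj a b
  | _, _ => false end.
Lemma gsum_adj_sym : symmetric gsum_adj.
Proof. by case=> a; case=> b //=; rewrite adj_sym. Qed.
Lemma gsum_adj_irrefl : irreflexive gsum_adj.
Proof. by case=> a /=; rewrite adj_irrefl. Qed.
Definition gsum : graph := Graph gsum_adj_sym gsum_adj_irrefl.
End Union.

Definition connected (G : graph) : Prop :=
  0 < #|vertex G| /\ forall x y : vertex G, connect adj x y.

Definition regular (G : graph) : Prop :=
  exists k, forall x : vertex G, #|[set y | adj x y]| = k.

(* Main.v *)
Require Import Defs.
From mathcomp Require Import all_boot.
From Stdlib Require Import Classical.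
Set Implicit Arguments. Unset Strict Implicit. Unset Printing Implicit Defensive.


Definition nb (G : graph) (x : vertex G) : {set vertex G} := [set y | adj x y].

Definition pcol (G H : graph) (S : {set vertex G}) : Prop :=
  exists F : vertex G -> vertex H, forall x y, x \in S -> y \in S -> adj x y = adj (F x) (F y).

Lemma pcol_induced (G H : graph) (h0 : vertex H) (S : {set vertex G}) :
  full_colourable (induced S) H <-> pcol H S.
Proof.
split.
- case=> g Hg.
  exists (fun x => odflt h0 (omap g (@insub _ (fun x => x \in S) _ x))).
  move=> x y xS yS; rewrite (insubT (fun x => x \in S) xS) (insubT (fun x => x \in S) yS) /=.
  exact: (Hg (exist _ x xS) (exist _ y yS)).
- case=> F HF; exists (fun s => F (val s)) => s t; exact: HF (valP s) (valP t).
Qed.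

Lemma pcol_mono (G H : graph) (S T : {set vertex G}) : S \subset T -> pcol H T -> pcol H S.
Proof. move=> /subsetP sST [F HF]; exists F => x y xS yS; apply: HF; exact: sST. Qed.

Lemma pcolT (G H : graph) : full_colourable G H <-> pcol H [set: vertex G].
Proof.
split; case=> F HF; exists F => x y //; exact: HF.
Qed.

Definition mo (H G : graph) : Prop :=
  ~ pcol H [set: vertex G] /\ forall v : vertex G, pcol H ([set: vertex G] :\ v).

Lemma moE (H G : graph) (h0 : vertex H) : min_obstruction H G <-> mo H G.
Proof.
split.
- case=> nc Hp; split; first by move/pcolT.
  move=> v; apply/(pcol_induced h0)/Hp; exact: properD1.
- case=> nc Hp; split; first by move/pcolT.
  move=> S /properP [_ [v _ vS]]; apply/(pcol_induced h0).
  apply: pcol_mono (Hp v); apply/subsetP=> x xS; rewrite !inE andbT.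
  by apply/eqP=> e; move: vS; rewrite -e xS.
Qed.


Section Sumner.
Variable G : graph.
Implicit Types x y u c d w : vertex G.

Definition triple x y u := [/\ ~~ adj x y, adj y u, ~~ adj x u &
  forall w, w != u -> adj x w = adj y w].

Definition ptdet := forall x y, (forall w, adj x w = adj y w) -> x = y.

Lemma triple_neq x y u : triple x y u -> x != y.
Proof. by case=> _ yu xu _; apply/eqP=> e; move: xu; rewrite e yu. Qed.

Lemma triple_nb x y u : triple x y u -> nb y = u |: nb x /\ u \notin nb x.
Proof.
case=> _ yu xu H; split; last by rewrite inE.
apply/setP=> w; rewrite !inE; case: (eqVneq w u) => [->|wu] /=; first by rewrite yu.
by rewrite H.
Qed.

Lemma L1 x y u c d : triple x y u -> triple c d y -> d = u.
Proof.
move=> t1 t2; have xy := triple_neq t1.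
case: t1 => nxy yu xu H1; case: t2 => ncd dy cy H2.
apply/eqP; apply/negPn/negP=> du.
have xd : adj x d by rewrite H1 // adj_sym.
have cx : adj c x by rewrite H2 // adj_sym.
case: (eqVneq c u) => [cu|cu].
  by move: xu; rewrite -cu adj_sym cx.
by move: cy; rewrite adj_sym -H1 // adj_sym cx.
Qed.

Lemma L2 x y u c d : triple x y u -> triple c d x -> c = u.
Proof.
move=> t1 t2; have xy := triple_neq t1.
case: t1 => nxy yu xu H1; case: t2 => ncd dx cx H2.
have du : d != u by apply/eqP=> e; move: xu; rewrite -e adj_sym dx.
have yd : adj y d by rewrite -H1 // adj_sym.
have cy : adj c y by rewrite H2 1?eq_sym // adj_sym.
apply/eqP; apply/negPn/negP=> cu.
by move: cx; rewrite adj_sym H1 // adj_sym cy.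
Qed.

Lemma sumner (z0 : vertex G) : ~ (forall z, exists x y, triple x y z).
Proof.
move=> Hall.
have step : forall x y u, triple x y u ->
    exists x' y' u', triple x' y' u' /\ #|nb y'| = #|nb y|.+1.
  move=> x y u t0.
  have [c [d t1]] := Hall y.
  have du := L1 t0 t1; subst d.
  have [c' [d' t2]] := Hall c.
  have cy := L2 t1 t2; subst c'.
  exists y, d', c; split=> //.
  have [-> nin] := triple_nb t2.
  by rewrite cardsU1 nin.
have big : forall m, exists x y u, triple x y u /\ m <= #|nb y|.
  elim=> [|m [x [y [u [t hm]]]]].
    have [x [y t]] := Hall z0; by exists x, y, z0.
  have [x' [y' [u' [t' e]]]] := step _ _ _ t.
  by exists x', y', u'; rewrite e ltnS.
have [x [y [u [_ hm]]]] := big #|vertex G|.+1.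
by move: (max_card (nb y)); rewrite leqNgt hm.
Qed.

End Sumner.


Section Core.
Variables (H G : graph).

Lemma ptdet_mo : mo H G -> ptdet G.
Proof.
case=> nc Hp x y Hxy; apply/eqP/negPn/negP=> nxy.
have [F HF] := Hp y.
apply: nc; exists (fun z => if z == y then F x else F z) => a b _ _.
have xS : x \in [set: vertex G] :\ y by rewrite !inE nxy.
case: (eqVneq a y) => [->|ay]; case: (eqVneq b y) => [->|by_].
- by rewrite !adj_irrefl.
- by rewrite -Hxy HF // !inE by_.
- by rewrite adj_sym -Hxy adj_sym HF // !inE ay.
- by rewrite HF // !inE ?ay ?by_.
Qed.

Lemma noninj (z : vertex G) (F : vertex G -> vertex H) a b :
  ptdet G -> (forall x y, x \in [set: vertex G] :\ z -> y \in [set: vertex G] :\ z ->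
     adj x y = adj (F x) (F y)) ->
  a \in [set: vertex G] :\ z -> b \in [set: vertex G] :\ z -> a != b -> F a = F b ->
  triple a b z \/ triple b a z.
Proof.
move=> pd HF aS bS ab Fab.
have nab : ~~ adj a b by rewrite HF // Fab adj_irrefl.
have Hw : forall w, w != z -> adj a w = adj b w.
  by move=> w wz; rewrite !HF ?Fab // !inE wz.
case: (boolP (adj a z)) => az; case: (boolP (adj b z)) => bz.
- by case/negP: ab; apply/eqP/pd=> w; case: (eqVneq w z) => [->|/Hw]; rewrite ?az ?bz.
- by right; split=> //; [rewrite adj_sym | move=> w /Hw ->].
- by left.
- by case/negP: ab; apply/eqP/pd=> w; case: (eqVneq w z) => [->|/Hw]; rewrite ?(negbTE az) ?(negbTE bz).
Qed.

Variable k : nat.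
Hypothesis Hk : forall h : vertex H, #|nb h| = k.
Hypothesis card : #|vertex G| = #|vertex H| + 1.

Lemma deg_lemma (v : vertex G) (F : vertex G -> vertex H) :
  (forall x y, x \in [set: vertex G] :\ v -> y \in [set: vertex G] :\ v ->
     adj x y = adj (F x) (F y)) ->
  {in [set: vertex G] :\ v &, injective F} ->
  forall z, z != v -> #|nb z :\ v| = k.
Proof.
move=> HF inj z zv.
have cS : #|[set: vertex G] :\ v| = #|vertex H|.
  by have := cardsD1 v [set: vertex G]; rewrite in_setT cardsT card addn1 add1n => -[].
have im : F @: ([set: vertex G] :\ v) = [set: vertex H].
  apply/eqP; rewrite eqEcard subsetT /= cardsT card_in_imset // cS //.
have zS : z \in [set: vertex G] :\ v by rewrite !inE zv.
have -> : #|nb z :\ v| = #|F @: (nb z :\ v)|.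
  rewrite card_in_imset //; move=> a b /setD1P [av _] /setD1P [bv _]; apply: inj;
    by rewrite !inE ?av ?bv.
rewrite -(Hk (F z)); suff -> : F @: (nb z :\ v) = nb (F z) by []; apply/setP=> h; apply/imsetP/idP.
- case=> w /setD1P [wv]; rewrite inE => zw ->; rewrite inE -HF //.
  by rewrite !inE wv.
- rewrite inE => Fzh.
  have : h \in F @: ([set: vertex G] :\ v) by rewrite im.
  case/imsetP=> w wS e; exists w => //.
  move: (wS); rewrite !inE => /andP [wv _]; rewrite wv /=.
  by rewrite HF // -e.
Qed.

End Core.


Section Core2.
Variables (H G : graph) (k : nat).
Hypothesis Hk : forall h : vertex H, #|nb h| = k.
Hypothesis card : #|vertex G| = #|vertex H| + 1.

Lemma degD (x v : vertex G) : #|nb x| = adj x v + #|nb x :\ v|.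
Proof. by rewrite (cardsD1 v (nb x)) inE. Qed.

Lemma core (v0 : vertex G) : mo H G ->
  exists v (F : vertex G -> vertex H),
  [/\ (forall x y, x \in [set: vertex G] :\ v -> y \in [set: vertex G] :\ v ->
     adj x y = adj (F x) (F y)),
    {in [set: vertex G] :\ v &, injective F} &
    forall z, z != v -> (adj v z /\ #|nb v| = k.+1) \/ (~~ adj v z /\ #|nb v|.+1 = k)].
Proof.
move=> m; have pd := ptdet_mo m; case: m => nc Hp.
have [v nv] := not_all_ex_not _ _ (sumner v0).
have [F HF] := Hp v.
have inj : {in [set: vertex G] :\ v &, injective F}.
  move=> a b aS bS e; apply/eqP/negPn/negP=> ab.
  by case: (noninj pd HF aS bS ab e) => t; apply: nv; [exists a, b | exists b, a].
have degv := deg_lemma Hk card HF inj.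
exists v, F; split=> // z zv.
have [Fz HFz] := Hp z.
have zS : z \in [set: vertex G] :\ v by rewrite !inE zv.
have vS : v \in [set: vertex G] :\ z by rewrite !inE eq_sym zv.
case: (classic (exists a b, [/\ a \in [set: vertex G] :\ z, b \in [set: vertex G] :\ z,
     a != b & Fz a = Fz b])) => [[a [b [aS bS ab e]]]|N].
- have gen : forall x y, triple x y z -> x \in [set: vertex G] :\ z ->
      y \in [set: vertex G] :\ z ->
      (adj v z /\ #|nb v| = k.+1) \/ (~~ adj v z /\ #|nb v|.+1 = k).
    move=> x y t xS yS; have xy := triple_neq t.
    have [nby nin] := triple_nb t.
    have cxy : #|nb y| = (#|nb x|).+1 by rewrite nby cardsU1 nin.
    case: (t) => nxy yz xz Hw.
    case: (eqVneq x v) => [exv|xv].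
      subst x; right; split=> //.
      have yv : y != v by rewrite eq_sym.
      by rewrite -(degv _ yv) -cxy (degD y v) adj_sym (negbTE nxy).
    case: (eqVneq y v) => [eyv|yv].
      subst y; left; split=> //.
      by rewrite cxy -(degv _ xv) (degD x v) (negbTE nxy).
    have Hv : adj x v = adj y v by apply: Hw; rewrite eq_sym.
    exfalso; move: cxy; rewrite (degD y v) (degD x v) (degv _ xv) (degv _ yv) -Hv.
    by move/eqP; rewrite -addnS eqn_add2l ltn_eqF.
  by case: (noninj pd HFz aS bS ab e) => tr; [apply: (gen _ _ tr aS bS) | apply: (gen _ _ tr bS aS)].
- have injz : {in [set: vertex G] :\ z &, injective Fz}.
    move=> a1 b1 aS1 bS1 e1; apply/eqP/negPn/negP=> ab1; apply: N; by exists a1, b1.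
  have degz := deg_lemma Hk card HFz injz.
  have vz : adj v z.
    apply/negPn/negP=> nvz; move/eqP: zv; apply; apply: pd=> w.
    case: (eqVneq w v) => [->|wv]; first by rewrite adj_irrefl adj_sym (negbTE nvz).
    case: (eqVneq w z) => [->|wz]; first by rewrite adj_irrefl (negbTE nvz).
    have := degD w v; rewrite (degD w z) (degz _ wz) (degv _ wv) => /eqP.
    rewrite eqn_add2r (adj_sym w v) (adj_sym w z); by case: (adj v w); case: (adj z w).
  left; split=> //.
  by rewrite (degD v z) vz (degz v) // eq_sym.
Qed.

End Core2.


Lemma iso_sym (A B : graph) : iso A B -> iso B A.
Proof.
case=> f [[g fg gf] Hf]; exists g; split; first by exists f.
by move=> x y; rewrite Hf !gf.
Qed.

Lemma iso_card (A B : graph) : iso A B -> #|vertex A| = #|vertex B|.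
Proof. by case=> f [bf _]; apply: bij_eq_card bf. Qed.

Lemma iso_K_complete (H : graph) n : iso H (K n) -> forall x y : vertex H, adj x y = (x != y).
Proof.
case=> f [bf Hf] x y; rewrite Hf /=.
by rewrite /K_adj (inj_eq (bij_inj bf)).
Qed.

Lemma complete_iso (G : graph) m : (forall x y : vertex G, adj x y = (x != y)) ->
  #|vertex G| = m -> iso G (K m).
Proof.
move=> Hc e; exists (fun x => cast_ord e (enum_rank x)); split.
  exists (fun i => enum_val (cast_ord (esym e) i)) => x /=.
    by rewrite cast_ordK enum_rankK.
  by rewrite enum_valK cast_ordKV.
move=> x y; rewrite Hc /= /K_adj (inj_eq (@cast_ord_inj _ _ e)) (inj_eq enum_rank_inj) //.
Qed.

Lemma mo_isoH (H H' G : graph) : iso H H' -> mo H G -> mo H' G.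
Proof.
move=> i; have [g [_ Hg]] := iso_sym i; case: i => f [_ Hf].
case=> nc Hp; split.
  by case=> F HF; apply: nc; exists (fun x => g (F x)) => x y xS yS; rewrite HF // -Hg.
move=> v; have [F HF] := Hp v; exists (fun x => f (F x)) => x y xS yS.
by rewrite HF // -Hf.
Qed.

Lemma mo_isoG (H G G' : graph) : iso G G' -> mo H G' -> mo H G.
Proof.
move=> i; have [g [_ Hg]] := iso_sym i; case: i => f [[f' ff' f'f] Hf].
case=> nc Hp; split.
  case=> F HF; apply: nc; exists (fun x => F (g x)) => x y _ _.
  by rewrite -HF ?in_setT // -Hg.
have finj : injective f := can_inj ff'.
move=> v; have [F HF] := Hp (f v); exists (fun x => F (f x)) => x y xS yS.
rewrite Hf HF // !inE (inj_eq finj) andbT; [move: xS | move: yS]; by rewrite !inE andbT.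
Qed.


Lemma complete_mo (G : graph) n : 0 < n -> (forall x y : vertex G, adj x y = (x != y)) ->
  #|vertex G| = n.+1 -> mo (K n) G.
Proof.
move=> n0 Hc cG; split.
  case=> F HF.
  have inj : injective F.
    move=> x y e; apply/eqP/negPn/negP=> xy.
    by move: (HF x y (in_setT x) (in_setT y)); rewrite Hc xy /= /K_adj e eqxx.
  by move: (leq_card _ inj); rewrite cG card_ord ltnn.
move=> v.
have cS : #|[set: vertex G] :\ v| = n.
  by have := cardsD1 v [set: vertex G]; rewrite in_setT cardsT cG add1n => -[].
have : 0 < #|[set: vertex G] :\ v| by rewrite cS.
case/card_gt0P=> x0 x0S.
exists (fun x => cast_ord cS (enum_rank_in x0S x)) => x y xS yS.
rewrite Hc /= /K_adj (inj_eq (@cast_ord_inj _ _ cS)).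
apply/idP/idP; apply: contra => /eqP e; apply/eqP; last by rewrite e.
by rewrite -(enum_rankK_in x0S xS) -(enum_rankK_in x0S yS) e.
Qed.

Lemma I2_eq (i j j' : 'I_2) : j != i -> j' != i -> j = j'.
Proof.
move=> hj hj'; apply/val_inj; move: hj hj' (ltn_ord i) (ltn_ord j) (ltn_ord j').
rewrite -!(inj_eq val_inj) /=.
by case: (val i) => [|[|?]]; case: (val j) => [|[|?]]; case: (val j') => [|[|?]].
Qed.

Lemma I1_eq (a b : 'I_1) : a = b.
Proof. by rewrite (ord1 a) (ord1 b). Qed.

Lemma K12_mo : mo (K 2) (gsum (K 1) (K 2)).
Proof.
split.
  case=> F HF.
  have ca := HF (inl ord0) (inr ord0) (in_setT _) (in_setT _).
  have cb := HF (inl ord0) (inr ord_max) (in_setT _) (in_setT _).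
  have ab := HF (inr ord0) (inr ord_max) (in_setT _) (in_setT _).
  move: ca cb ab; rewrite /= /K_adj => /esym/negbFE/eqP -> /esym/negbFE/eqP ->.
  by rewrite eqxx.
case=> [i|i].
  exists (fun x => match x with inl _ => ord0 | inr j => j end).
  move=> [a|a] [b|b]; rewrite !inE ?andbT //=; try rewrite (I1_eq a i); try rewrite (I1_eq b i); by rewrite eqxx.
exists (fun _ : vertex (gsum (K 1) (K 2)) => (ord0 : 'I_2)) => x y; rewrite /= /K_adj eqxx.
case: x => [a|a]; case: y => [b|b] //=; rewrite !inE /K_adj /=.
- by rewrite (I1_eq a b) eqxx.
- by rewrite !andbT !(inj_eq (@inr_inj _ _)) => ha hb; rewrite (I2_eq ha hb) eqxx.
Qed.


Lemma onereg_complete (H : graph) : connected H -> (forall h : vertex H, #|nb h| = 1) ->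
  forall x y : vertex H, adj x y = (x != y).
Proof.
case=> _ Hc H1 x y.
case: (eqVneq x y) => [->|xy]; first by rewrite adj_irrefl.
have /cards1P [m em] : #|nb x| == 1 by rewrite H1.
have : m \in nb x by rewrite em set11.
rewrite inE => xm.
have /cards1P [m' em'] : #|nb m| == 1 by rewrite H1.
have em2 : nb m = [set x].
  have : x \in nb m by rewrite inE adj_sym.
  by rewrite em' inE => /eqP ->.
have cl : forall u w, adj u w -> u \in [set x; m] -> w \in [set x; m].
  move=> u w uw; rewrite !inE => /orP [] /eqP eu; subst u.
    have : w \in nb x by rewrite inE.
    by rewrite em inE => ->; rewrite orbT.
  have : w \in nb m by rewrite inE.
  by rewrite em2 inE => ->.
have clo : closed (@adj H) (mem [set x; m]).
  move=> u w uw; apply/idP/idP; first exact: cl.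
  by apply: cl; rewrite adj_sym.
have := closed_connect clo (Hc x y); rewrite !inE eqxx /=.
by rewrite eq_sym (negbTE xy) /= => /esym /eqP ->.
Qed.

Lemma reg_complete (H : graph) k : (forall h : vertex H, #|nb h| = k) -> k.+1 = #|vertex H| ->
  forall x y : vertex H, adj x y = (x != y).
Proof.
move=> Hk ek x y.
have e : nb x = [set~ x].
  apply/eqP; rewrite eqEcard cardsC1 -ek Hk leqnn andbT.
  by apply/subsetP=> w; rewrite !inE; apply: contraTneq => ->; rewrite adj_irrefl.
have : y \in nb x = (y \in [set~ x]) by rewrite e.
by rewrite !inE eq_sym.
Qed.

Lemma core_complete (H G : graph) (v : vertex G) (F : vertex G -> vertex H) :
  (forall x y, x \in [set: vertex G] :\ v -> y \in [set: vertex G] :\ v ->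
     adj x y = adj (F x) (F y)) ->
  {in [set: vertex G] :\ v &, injective F} ->
  (forall x y : vertex H, adj x y = (x != y)) ->
  (forall z, z != v -> adj v z) ->
  forall x y : vertex G, adj x y = (x != y).
Proof.
move=> HF inj Hc Hu x y.
case: (eqVneq x y) => [->|xy]; first by rewrite adj_irrefl.
case: (eqVneq x v) => [exv|xv]; first by subst x; rewrite Hu // eq_sym.
case: (eqVneq y v) => [eyv|yv]; first by subst y; rewrite adj_sym Hu.
have xS : x \in [set: vertex G] :\ v by rewrite !inE xv.
have yS : y \in [set: vertex G] :\ v by rewrite !inE yv.
rewrite HF // Hc; apply/eqP=> e; move/eqP: xy; apply; exact: inj.
Qed.

Lemma iso_K12 (G : graph) (v : vertex G) :
  #|vertex G| = 3 ->
  (forall z, ~~ adj v z) ->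
  (forall x y, x != v -> y != v -> adj x y = (x != y)) ->
  iso G (gsum (K 1) (K 2)).
Proof.
move=> c3 Hv Hc.
have c2 : #|[set~ v]| = 2 by rewrite cardsC1 c3.
have /card_gt0P [a aS] : 0 < #|[set~ v]| by rewrite c2.
have av : a != v by rewrite -in_setC1.
have c1 : #|[set~ v] :\ a| == 1.
  by have := cardsD1 a [set~ v]; rewrite aS c2 add1n => -[<-].
have /cards1P [b eb] := c1.
have other : forall x, x != v -> x != a -> x = b.
  move=> x xv xa; have : x \in [set~ v] :\ a by rewrite !inE xv xa.
  by rewrite eb inE => /eqP.
pose g (x : vertex G) : 'I_2 := if x == a then ord0 else ord_max.
have geq : forall x y, x != v -> y != v -> (g x == g y) = (x == y).
  move=> x y xv yv; rewrite /g.
  case: (eqVneq x a) => [exa|xa]; case: (eqVneq y a) => [eya|ya]; rewrite ?exa ?eya ?eqxx //.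
  - by rewrite [a == y]eq_sym (negbTE ya).
  - by rewrite (negbTE xa).
  - by rewrite (other x xv xa) (other y yv ya) !eqxx.
pose f (x : vertex G) : vertex (gsum (K 1) (K 2)) :=
  if x == v then inl ord0 else inr (g x).
have finj : injective f.
  move=> x y; rewrite /f.
  case: (eqVneq x v) => [->|xv]; case: (eqVneq y v) => [->|yv] //.
  by case=> /eqP; rewrite geq // => /eqP.
exists f; split.
  have cc : #|vertex (gsum (K 1) (K 2))| <= #|vertex G| by rewrite c3 card_sum !card_ord.
  exact: inj_card_bij finj cc.
move=> x y; rewrite /f.
case: (eqVneq x v) => [->|xv]; case: (eqVneq y v) => [->|yv] /=.
- by rewrite adj_irrefl.
- by rewrite (negbTE (Hv y)).
- by rewrite adj_sym (negbTE (Hv x)).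
- by rewrite Hc // /K_adj geq.
Qed.


Theorem proposition3p4 (H : graph) :
  connected H -> regular H ->
  forall G : graph, #|vertex G| = #|vertex H| + 1 ->
    (iso H (K 2) ->
       (min_obstruction H G <-> iso G (gsum (K 1) (K 2)) \/ iso G (K 3))) /\
    (forall n, n <> 2 -> iso H (K n) ->
       (min_obstruction H G <-> iso G (K n.+1))) /\
    ((forall n, ~ iso H (K n)) -> ~ min_obstruction H G).
Proof.
move=> conn [k Hk0] G cG.
have Hk : forall h : vertex H, #|nb h| = k by [].
have [cH _] := conn.
have /card_gt0P [h0 _] := cH.
have /card_gt0P [v0 _] : 0 < #|vertex G| by rewrite cG addn1.
have main : mo H G -> exists v (F : vertex G -> vertex H),
  [/\ (forall x y, x \in [set: vertex G] :\ v -> y \in [set: vertex G] :\ v ->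
     adj x y = adj (F x) (F y)),
    {in [set: vertex G] :\ v &, injective F} &
    ((forall z, z != v -> adj v z) /\ #|nb v| = k.+1) \/
    ((forall z, ~~ adj v z) /\ k = 1)].
  move=> m; have [v [F [HF inj Hz]]] := core Hk cG v0 m.
  exists v, F; split=> //.
  have : 0 < #|[set~ v]| by rewrite cardsC1 cG addn1.
  case/card_gt0P=> z; rewrite in_setC1 => zv.
  case: (Hz z zv) => [[_ e]|[_ e]].
    left; split=> // z' z'v; case: (Hz z' z'v) => [[] //|[_]].
    by rewrite e => /eqP; rewrite -addn2 -{2}(addn0 k) eqn_add2l.
  right.
  have nv : forall z', ~~ adj v z'.
    move=> z'; case: (eqVneq z' v) => [->|z'v]; first by rewrite adj_irrefl.
    case: (Hz z' z'v) => [[_]|[] //].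
    by rewrite -e => /eqP; rewrite -addn2 -{1}(addn0 #|nb v|) eqn_add2l.
  split=> //; rewrite -e.
  have e0 : nb v = set0 by apply/setP=> w; rewrite !inE (negbTE (nv w)).
  by rewrite e0 cards0.
have mE : min_obstruction H G <-> mo H G by apply: moE.
split; [|split].
- move=> iH; have Hc := iso_K_complete iH; have cH2 := iso_card iH.
  split.
  + move/mE; case/main=> v [F [HF inj [[Hu _]|[Hv _]]]].
      right; apply: complete_iso; last by rewrite cG cH2 card_ord.
      exact: core_complete HF inj Hc Hu.
    left; apply: (iso_K12 (v := v)) => //; first by rewrite cG cH2 card_ord.
    move=> x y xv yv.
    rewrite HF ?Hc ?inE ?xv ?yv //.
    apply/idP/idP; apply: contra => /eqP e; apply/eqP; first by rewrite e.
    by apply: inj; rewrite ?inE ?xv ?yv.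
  + move=> hG; apply/mE; apply: (mo_isoH (iso_sym iH)); case: hG => hG.
      exact: mo_isoG hG K12_mo.
    apply: complete_mo => //; first exact: iso_K_complete hG.
    by rewrite cG cH2 card_ord.
- move=> n n2 iH; have Hc := iso_K_complete iH; have cHn := iso_card iH.
  split.
  + move/mE; case/main=> v [F [HF inj [[Hu _]|[Hv k1]]]].
      apply: complete_iso; last by rewrite cG cHn card_ord addn1.
      exact: core_complete HF inj Hc Hu.
    exfalso; apply: n2.
    have : #|nb h0| = #|[set~ h0]|.
      by have -> : nb h0 = [set~ h0] by apply/setP=> w; rewrite !inE Hc eq_sym.
    by rewrite Hk k1 cardsC1 cHn card_ord; case: n {iH Hc cHn} => [|[|[|]]].
  + move=> hG; apply/mE; apply: (mo_isoH (iso_sym iH)); apply: complete_mo.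
    * by rewrite -(card_ord n) -cHn.
    * exact: iso_K_complete hG.
    * by rewrite cG cHn card_ord addn1.
- move=> notK /mE m; case: (main m) => v [F [HF inj [[Hu e]|[Hv k1]]]].
    apply: (notK #|vertex H|); apply: complete_iso => //.
    apply: (reg_complete Hk); rewrite -e.
    have -> : nb v = [set~ v].
      apply/setP=> w; rewrite !inE; case: (eqVneq w v) => [->|wv]; first by rewrite adj_irrefl.
      exact: Hu.
    by rewrite cardsC1 cG addn1.
  apply: (notK #|vertex H|); apply: complete_iso => //.
  by apply: onereg_complete => // h; rewrite Hk k1.
Qed.
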